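(* Let $\mathcal{E}^\infty$ denote the infinite prolongation of Pleba\'nski's second heavenly equation $$u_{xz}=u_{ty}+u_{yy}\,u_{zz}-u_{yz}^2$$ for a function $u(t,x,y,z)$, and let $\bar D_t,\bar D_x,\bar D_y,\bar D_z$ be the restrictions of the total derivatives $D_t,D_x,D_y,D_z$ to $\mathcal{E}^\infty$. On $\mathcal{E}^\infty\times\mathbb{R}^\infty$, with additional fibre coordinates $v_{i,j}$, $i,j\ge 0$ (where $v_{0,0}=v$, $v_{i,j}$ corresponds to $\partial^{i+j}v/\partial y^i\partial z^j$), define $$\widetilde D_y=\bar D_y+\sum_{i,j\ge0}v_{i+1,j}\frac{\partial}{\partial v_{i,j}},\qquad \widetilde D_z=\bar D_z+\sum_{i,j\ge0}v_{i,j+1}\frac{\partial}{\partial v_{i,j}},$$ $$\widetilde D_t=\bar D_t+\sum_{i,j\ge0}\widetilde D_y^{\,i}\widetilde D_z^{\,j}\big((u_{yz}+v_{0,0})\,v_{0,1}-u_{zz}\,v_{1,0}\big)\frac{\partial}{\partial v_{i,j}},$$ $$\widetilde D_x=\bar D_x+\sum_{i,j\ge0}\widetilde D_y^{\,i}\widetilde D_z^{\,j}\big(u_{yy}\,v_{0,1}-(u_{yz}-v_{0,0})\,v_{1,0}\big)\frac{\partial}{\partial v_{i,j}}.$$ Then the four vector fields $\widetilde D_t,\widetilde D_x,\widetilde D_y,\widetilde D_z$ pairwise commute; that is, the system $$v_t=(u_{yz}+v)\,v_z-u_{zz}\,v_y,\qquad v_x=u_{yy}\,v_z-(u_{yz}-v)\,v_y$$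 defines a differential covering (zero-curvature representation) of the second heavenly equation.
   Context: A differential covering of a PDE $\mathcal{E}$ with infinite prolongation $\mathcal{E}^\infty$ is given by extending the restricted total derivative operators $\bar D_t,\bar D_x,\bar D_y,\bar D_z$ to vector fields $\widetilde D_t,\widetilde D_x,\widetilde D_y,\widetilde D_z$ on $\mathcal{E}^\infty\times\mathbb{R}^\infty$ (new fibre coordinates) that project to the $\bar D$'s and commute pairwise; equivalently, the system of equations for the new dependent variable is compatible modulo $\mathcal{E}$ and its differential consequences. Here $u_{yz}$, $u_{yy}$, $u_{zz}$ denote the corresponding jet coordinates of second derivatives of $u$. *)

(* Defs.v *)
From HB Require Import structures.
From mathcomp Require Import all_boot all_order all_algebra.
From mathcomp Require Import reals.
Set Implicit Arguments. Unset Strict Implicit. Unset Printing Implicit Defensive.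
Import Order.TTheory GRing.Theory Num.Theory.
Local Open Scope ring_scope.

(** Fibre coordinates of J^oo(R^4,R) x R^oo.
    [U a b c d] is the jet coordinate u_{t^a x^b y^c z^d};
    [V i j] is the covering coordinate v_{i,j} (~ d^{i+j} v / dy^i dz^j). *)
Inductive jcoord : Type :=
  | U of nat & nat & nat & nat
  | V of nat & nat.

(** Polynomial expressions (integer coefficients) in finitely many coordinates:
    these are the functions on J^oo x R^oo needed here. *)
Inductive expr : Type :=
  | Cst of int
  | Var of jcoord
  | Add of expr & expr
  | Mul of expr & expr.

Definition Sub (e1 e2 : expr) : expr := Add e1 (Mul (Cst (-1)) e2).

Fixpoint eval (R : realType) (p : jcoord -> R) (e : expr) : R :=
  match e with
  | Cst z => z%:~R
  | Var c => p c
  | Add a b => eval p a + eval p b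
  | Mul a b => eval p a * eval p b
  end.

(** A vector field sum_c X(c) d/dc is given by its components X(c);
    [der X] is its action (as a derivation) on functions. *)
Definition vfield := jcoord -> expr.

Fixpoint der (X : vfield) (e : expr) : expr :=
  match e with
  | Cst _ => Cst 0
  | Var c => X c
  | Add a b => Add (der X a) (der X b)
  | Mul a b => Add (Mul (der X a) b) (Mul a (der X b))
  end.

Definition comm (X Y : vfield) : vfield :=
  fun c => Sub (der X (Y c)) (der Y (X c)).

Definition Dt : vfield := fun c =>
  match c with U a b c d => Var (U a.+1 b c d) | V _ _ => Cst 0 end.
Definition Dx : vfield := fun c =>
  match c with U a b c d => Var (U a b.+1 c d) | V _ _ => Cst 0 end.
Definition Dy : vfield := fun c =>
  match c with U a b c d => Var (U a b c.+1 d) | V _ _ => Cst 0 end.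
Definition Dz : vfield := fun c =>
  match c with U a b c d => Var (U a b c d.+1) | V _ _ => Cst 0 end.

Definition u_xz := Var (U 0 1 0 1).
Definition u_ty := Var (U 1 0 1 0).
Definition u_yy := Var (U 0 0 2 0).
Definition u_zz := Var (U 0 0 0 2).
Definition u_yz := Var (U 0 0 1 1).
Definition heavenlyF : expr :=
  Sub u_xz (Add u_ty (Sub (Mul u_yy u_zz) (Mul u_yz u_yz))).

(** E^oo x R^oo: the points of J^oo x R^oo at which all differential
    consequences D_t^a D_x^b D_y^c D_z^d F vanish. *)
Definition Einf (R : realType) (p : jcoord -> R) : Prop :=
  forall a b c d : nat,
    eval p (iter a (der Dt) (iter b (der Dx) (iter c (der Dy)
              (iter d (der Dz) heavenlyF)))) = 0.

(** The extended fields D~_y, D~_z (tangent to E^oo x R^oo, restricting to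
    the ones of the paper). *)
Definition Dty : vfield := fun c =>
  match c with U a b c d => Var (U a b c.+1 d) | V i j => Var (V i.+1 j) end.
Definition Dtz : vfield := fun c =>
  match c with U a b c d => Var (U a b c d.+1) | V i j => Var (V i j.+1) end.

Definition v0 := Var (V 0 0).
Definition v_y := Var (V 1 0).
Definition v_z := Var (V 0 1).

Definition f_t : expr := Sub (Mul (Add u_yz v0) v_z) (Mul u_zz v_y).
Definition f_x : expr := Sub (Mul u_yy v_z) (Mul (Sub u_yz v0) v_y).

Definition Dtt : vfield := fun c =>
  match c with
  | U a b c d => Var (U a.+1 b c d)
  | V i j => iter i (der Dty) (iter j (der Dtz) f_t)
  end.
Definition Dtx : vfield := fun c =>
  match c with
  | U a b c d => Var (U a b.+1 c d)
  | V i j => iter i (der Dty) (iter j (der Dtz) f_x)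
  end.

Inductive dir : Type := Tdir | Xdir | Ydir | Zdir.

Definition Dtilde (k : dir) : vfield :=
  match k with Tdir => Dtt | Xdir => Dtx | Ydir => Dty | Zdir => Dtz end.

(* Main.v *)
Require Import Defs.
From mathcomp Require Import all_boot all_order all_algebra.
From mathcomp Require Import reals.
From mathcomp Require Import ring.
Set Implicit Arguments. Unset Strict Implicit. Unset Printing Implicit Defensive.
Import Order.TTheory GRing.Theory Num.Theory.
Local Open Scope ring_scope.

Section S.
Variable R : realType.
Implicit Types (p q : jcoord -> R) (e : expr) (X Y Z : vfield).

Definition eqv e1 e2 := forall p : jcoord -> R, eval p e1 = eval p e2.

Lemma eval_ext p1 p2 e : (forall c, p1 c = p2 c) -> eval p1 e = eval p2 e.
Proof. by move=> h; elim: e => [z|c|a /= -> b ->|a /= -> b ->] /=. Qed.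

Fixpoint pev p q e : {poly R} :=
  match e with
  | Cst z => (z%:~R)%:P
  | Var c => (p c)%:P + (q c)%:P * 'X
  | Add a b => pev p q a + pev p q b
  | Mul a b => pev p q a * pev p q b
  end.

Lemma pev_eval p q e t : (pev p q e).[t] = eval (fun c => p c + q c * t) e.
Proof.
elim: e => /= [z|c|a IHa b IHb|a IHa b IHb]; rewrite ?hornerE //.
- by rewrite IHa IHb.
- by rewrite IHa IHb.
Qed.

Lemma pev0 p q e : (pev p q e).[0] = eval p e.
Proof. by rewrite pev_eval; apply: eval_ext => c; rewrite mulr0 addr0. Qed.

Lemma pev_der p X e :
  (pev p (fun c => eval p (X c)) e)^`().[0] = eval p (der X e).
Proof.
elim: e => /= [z|c|a IHa b IHb|a IHa b IHb].
- by rewrite derivC horner0.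
- by rewrite !derivE !hornerE.
- by rewrite derivD hornerD IHa IHb.
- by rewrite derivM hornerD !hornerM IHa IHb !pev0.
Qed.

Lemma poly_ext (P Q : {poly R}) : (forall t, P.[t] = Q.[t]) -> P = Q.
Proof.
move=> h; apply/eqP; rewrite -subr_eq0; apply/eqP.
apply: (@roots_geq_poly_eq0 _ _ [seq i%:R | i <- iota 0 (size (P - Q))]).
- by apply/allP => x /mapP [i _ ->]; rewrite /root hornerD hornerN h subrr.
- by rewrite map_inj_uniq ?iota_uniq // => m n /eqP; rewrite eqr_nat => /eqP.
- by rewrite size_map size_iota.
Qed.

Lemma der_ext X e1 e2 : eqv e1 e2 -> eqv (der X e1) (der X e2).
Proof.
move=> h p; rewrite -!pev_der; congr (_.[0]); congr (_^`()).
by apply: poly_ext => t; rewrite !pev_eval.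
Qed.

Lemma iter_ext X n e1 e2 : eqv e1 e2 -> eqv (iter n (der X) e1) (iter n (der X) e2).
Proof. by move=> h; elim: n => //= n IH; apply: der_ext. Qed.

Lemma der_comm_eval p X Y e :
  eval p (der X (der Y e)) = eval p (der Y (der X e)) + eval p (der (comm X Y) e).
Proof.
elim: e => /= [z|c|a IHa b IHb|a IHa b IHb].
- by rewrite mulr0z addr0.
- by rewrite /comm /Sub /=; rewrite mulN1r addrC subrK.
- by rewrite IHa IHb; ring.
- rewrite IHa IHb; ring.
Qed.

Lemma der_zero p Z e : (forall c, eval p (Z c) = 0) -> eval p (der Z e) = 0.
Proof.
by move=> h; elim: e => [z|c|a /= -> b ->|a /= -> b ->] /=; rewrite ?h ?mulr0z ?mul0r ?mulr0 ?addr0.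
Qed.

Definition commutes X Y := forall p c, eval p (comm X Y c) = 0.

Lemma commute_iter X Y n e : commutes X Y ->
  eqv (der X (iter n (der Y) e)) (iter n (der Y) (der X e)).
Proof.
move=> h; elim: n => //= n IH p.
rewrite der_comm_eval (der_zero _ (h p)) addr0.
exact: der_ext IH p.
Qed.


Lemma evalSub p a b : eval p (Defs.Sub a b) = eval p a - eval p b.
Proof. by rewrite /= mulN1r. Qed.

Definition G a b c d :=
  iter a (der Dt) (iter b (der Dx) (iter c (der Dy) (iter d (der Dz) heavenlyF))).

Definition E0 := Defs.Sub (der Dtt f_x) (der Dtx f_t).

Lemma E0_eq : eqv E0 (Add (Mul (Mul (Cst (-1)) v_z) (G 0 0 1 0)) (Mul v_y (G 0 0 0 1))).
Proof. move=> p; rewrite /E0 /G /=. ring. Qed.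


Lemma eqv_trans e1 e2 e3 : eqv e1 e2 -> eqv e2 e3 -> eqv e1 e3.
Proof. by move=> h1 h2 p; rewrite h1 h2. Qed.

Lemma der_sub X a b : eqv (der X (Defs.Sub a b)) (Defs.Sub (der X a) (der X b)).
Proof. by move=> p; rewrite /= !mulN1r; ring. Qed.

Lemma iter_sub X n a b :
  eqv (iter n (der X) (Defs.Sub a b)) (Defs.Sub (iter n (der X) a) (iter n (der X) b)).
Proof.
elim: n => //= n IH; apply: eqv_trans (der_ext X IH) _; exact: der_sub.
Qed.

Fixpoint Uonly e : Prop :=
  match e with
  | Cst _ => True
  | Var (U _ _ _ _) => True
  | Var (V _ _) => False
  | Add a b => Uonly a /\ Uonly b
  | Mul a b => Uonly a /\ Uonly b
  end.

Definition Ufield X := forall a b c d, Uonly (X (U a b c d)).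

Lemma Uonly_der X e : Ufield X -> Uonly e -> Uonly (der X e).
Proof.
move=> hX; elim: e => [z|[a b c d|i j]|a IHa b IHb|a IHa b IHb] //=.
- by case=> /IHa ? /IHb.
- by case=> ha hb; split; split => //; [exact: IHa| exact: IHb].
Qed.

Lemma Uonly_iter X n e : Ufield X -> Uonly e -> Uonly (iter n (der X) e).
Proof. by move=> hX he; elim: n => //= n IH; apply: Uonly_der. Qed.

Lemma der_agree X Y e : (forall a b c d, X (U a b c d) = Y (U a b c d)) ->
  Uonly e -> der X e = der Y e.
Proof.
move=> h; elim: e => [z|[a b c d|i j]|a IHa b IHb|a IHa b IHb] //=.
- by case=> /IHa -> /IHb ->.
- by case=> /IHa -> /IHb ->.
Qed.

Lemma UDt : Ufield Dt. Proof. by []. Qed.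
Lemma UDx : Ufield Dx. Proof. by []. Qed.
Lemma UDy : Ufield Dy. Proof. by []. Qed.
Lemma UDz : Ufield Dz. Proof. by []. Qed.

Lemma UG a b c d : Uonly (G a b c d).
Proof.
by rewrite /G; do 4 (apply: Uonly_iter; first by []); rewrite /=.
Qed.


Ltac solve_comm := move=> p [a b c d|i j]; rewrite evalSub /=; ring.

Lemma c_Dy_Dt : commutes Dy Dt. Proof. solve_comm. Qed.
Lemma c_Dy_Dx : commutes Dy Dx. Proof. solve_comm. Qed.
Lemma c_Dz_Dt : commutes Dz Dt. Proof. solve_comm. Qed.
Lemma c_Dz_Dx : commutes Dz Dx. Proof. solve_comm. Qed.
Lemma c_Dz_Dy : commutes Dz Dy. Proof. solve_comm. Qed.
Lemma c_Dtz_Dty : commutes Dtz Dty. Proof. solve_comm. Qed.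

Lemma G_Dty a b c d : eqv (der Dty (G a b c d)) (G a b c.+1 d).
Proof.
rewrite (der_agree (Y := Dy)) //; last exact: UG.
rewrite /G; apply: eqv_trans; first exact: commute_iter c_Dy_Dt.
apply: iter_ext; apply: eqv_trans; first exact: commute_iter c_Dy_Dx.
by apply: iter_ext.
Qed.

Lemma G_Dtz a b c d : eqv (der Dtz (G a b c d)) (G a b c d.+1).
Proof.
rewrite (der_agree (Y := Dz)) //; last exact: UG.
rewrite /G; apply: eqv_trans; first exact: commute_iter c_Dz_Dt.
apply: iter_ext; apply: eqv_trans; first exact: commute_iter c_Dz_Dx.
apply: iter_ext; apply: eqv_trans; first exact: commute_iter c_Dz_Dy.
by apply: iter_ext.
Qed.

Inductive I : expr -> Prop :=
| I_mul A a b c d : I (Mul A (G a b c d))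
| I_add e1 e2 : I e1 -> I e2 -> I (Add e1 e2)
| I_eqv e1 e2 : I e1 -> eqv e1 e2 -> I e2.

Lemma I_zero p e : Einf p -> I e -> eval p e = 0.
Proof.
move=> hp; elim => [A a b c d|e1 e2 _ h1 _ h2|e1 e2 _ h1 h2].
- by rewrite /= hp mulr0.
- by rewrite /= h1 h2 addr0.
- by rewrite -(h2 p).
Qed.

Lemma I_der X : (forall a b c d, exists a' b' c' d', eqv (der X (G a b c d)) (G a' b' c' d')) ->
  forall e, I e -> I (der X e).
Proof.
move=> hX e; elim => [A a b c d|e1 e2 _ h1 _ h2|e1 e2 _ h1 h2] /=.
- apply: I_add; first exact: I_mul.
  have [a' [b' [c' [d' h]]]] := hX a b c d.
  apply: I_eqv (I_mul A a' b' c' d') _.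
  by move=> p /=; rewrite h.
- exact: I_add.
- exact: I_eqv h1 (der_ext X h2).
Qed.

Lemma I_iter_y n e : I e -> I (iter n (der Dty) e).
Proof.
move=> he; elim: n => //= n IH; apply: I_der IH => a b c d.
by exists a, b, c.+1, d; apply: G_Dty.
Qed.

Lemma I_iter_z n e : I e -> I (iter n (der Dtz) e).
Proof.
move=> he; elim: n => //= n IH; apply: I_der IH => a b c d.
by exists a, b, c, d.+1; apply: G_Dtz.
Qed.

Lemma I_E0 : I E0.
Proof.
apply: I_eqv; last by move=> p; rewrite E0_eq.
by apply: I_add; apply: I_mul.
Qed.


Lemma c_Dtt_Dty : commutes Dtt Dty.
Proof. move=> p [a b c d|i j]; rewrite /comm evalSub /=; [ring | by rewrite subrr]. Qed.
Lemma c_Dtx_Dty : commutes Dtx Dty.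
Proof. move=> p [a b c d|i j]; rewrite /comm evalSub /=; [ring | by rewrite subrr]. Qed.

Lemma c_Dtt_Dtz : commutes Dtt Dtz.
Proof.
move=> p [a b c d|i j]; rewrite /comm evalSub; first by rewrite /=; ring.
change (eval p (iter i (der Dty) (iter j.+1 (der Dtz) f_t)) -
  eval p (der Dtz (iter i (der Dty) (iter j (der Dtz) f_t))) = 0).
by rewrite (commute_iter _ _ c_Dtz_Dty p) subrr.
Qed.

Lemma c_Dtx_Dtz : commutes Dtx Dtz.
Proof.
move=> p [a b c d|i j]; rewrite /comm evalSub; first by rewrite /=; ring.
change (eval p (iter i (der Dty) (iter j.+1 (der Dtz) f_x)) -
  eval p (der Dtz (iter i (der Dty) (iter j (der Dtz) f_x))) = 0).
by rewrite (commute_iter _ _ c_Dtz_Dty p) subrr.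
Qed.

Lemma hard p c : Einf p -> eval p (comm Dtt Dtx c) = 0.
Proof.
move=> hp; case: c => [a b c d|i j]; rewrite /comm evalSub; first by rewrite /=; ring.
change (eval p (der Dtt (iter i (der Dty) (iter j (der Dtz) f_x))) -
  eval p (der Dtx (iter i (der Dty) (iter j (der Dtz) f_t))) = 0).
rewrite (commute_iter _ _ c_Dtt_Dty p) (commute_iter _ _ c_Dtx_Dty p).
rewrite (iter_ext _ _ (commute_iter _ _ c_Dtt_Dtz) p).
rewrite (iter_ext _ _ (commute_iter _ _ c_Dtx_Dtz) p).
rewrite -evalSub -(iter_sub _ _ _ _ p).
rewrite -(iter_ext _ _ (iter_sub _ _ _ _) p).
apply: I_zero hp _; apply: I_iter_y; apply: I_iter_z; exact: I_E0.
Qed.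

Lemma comm_anti p X Y c : eval p (comm X Y c) = - eval p (comm Y X c).
Proof. by rewrite /comm !evalSub opprB. Qed.

Lemma comm_self p X c : eval p (comm X X c) = 0.
Proof. by rewrite /comm evalSub subrr. Qed.

End S.

Theorem mainTheorem1 (R : realType) (k l : dir) (c : jcoord) (p : jcoord -> R) :
  Einf p -> eval p (comm (Dtilde k) (Dtilde l) c) = 0.
Proof.
move=> hp.
case: k; case: l; rewrite /Dtilde ?comm_self //;
  try (by apply: hard);
  try (by rewrite comm_anti hard ?oppr0);
  try (by apply: c_Dtt_Dty); try (by apply: c_Dtt_Dtz);
  try (by apply: c_Dtx_Dty); try (by apply: c_Dtx_Dtz);
  try (by apply: c_Dtz_Dty);
  try (by rewrite comm_anti c_Dtt_Dty oppr0);
  try (by rewrite comm_anti c_Dtt_Dtz oppr0);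
  try (by rewrite comm_anti c_Dtx_Dty oppr0);
  try (by rewrite comm_anti c_Dtx_Dtz oppr0);
  try (by rewrite comm_anti c_Dtz_Dty oppr0).
Qed.
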